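(* Let $B\in M_4(\mathbb{F}_2)$ be a non-derogative matrix. Then there exist $N,D\in M_4(\mathbb{F}_2)$ with $B=N+D$, $N^2=0$ and $D^4=D$.
   Context: A square matrix is non-derogative if its minimal polynomial equals its characteristic polynomial. $\mathbb{F}_2$ denotes the field with two elements. *)

(* Defs.v *)
From mathcomp Require Import all_boot all_order all_algebra.
Set Implicit Arguments. Unset Strict Implicit. Unset Printing Implicit Defensive.
Import GRing.Theory.
Local Open Scope ring_scope.

Definition non_derogative (F : fieldType) (n : nat) (A : 'M[F]_n.+1) : Prop :=
  mxminpoly A = char_poly A.

(* Main.v *)
Require Import Defs.
From mathcomp Require Import all_boot all_order all_algebra.
Import GRing.Theory.
Set Implicit Arguments. Unset Strict Implicit. Unset Printing Implicit Defensive.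
Inductive M := mk of bool & bool & bool & bool & bool & bool & bool & bool & bool & bool & bool & bool & bool & bool & bool & bool.
Inductive V := mv of bool & bool & bool & bool.
Definition ent (A : M) (i j : nat) : bool := let: mk a00 a01 a02 a03 a10 a11 a12 a13 a20 a21 a22 a23 a30 a31 a32 a33 := A in
  match i, j with
  | 0, 0 => a00
  | 0, 1 => a01
  | 0, 2 => a02
  | 0, 3 => a03
  | 1, 0 => a10
  | 1, 1 => a11
  | 1, 2 => a12
  | 1, 3 => a13
  | 2, 0 => a20
  | 2, 1 => a21
  | 2, 2 => a22
  | 2, 3 => a23
  | 3, 0 => a30
  | 3, 1 => a31
  | 3, 2 => a32
  | 3, 3 => a33
  | _, _ => false end.
Definition mmul (A C : M) := let: mk a00 a01 a02 a03 a10 a11 a12 a13 a20 a21 a22 a23 a30 a31 a32 a33 := A in let: mk c00 c01 c02 c03 c10 c11 c12 c13 c20 c21 c22 c23 c30 c31 c32 c33 := C in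
  mk ((a00 && c00) (+) (a01 && c10) (+) (a02 && c20) (+) (a03 && c30)) ((a00 && c01) (+) (a01 && c11) (+) (a02 && c21) (+) (a03 && c31)) ((a00 && c02) (+) (a01 && c12) (+) (a02 && c22) (+) (a03 && c32)) ((a00 && c03) (+) (a01 && c13) (+) (a02 && c23) (+) (a03 && c33)) ((a10 && c00) (+) (a11 && c10) (+) (a12 && c20) (+) (a13 && c30)) ((a10 && c01) (+) (a11 && c11) (+) (a12 && c21) (+) (a13 && c31)) ((a10 && c02) (+) (a11 && c12) (+) (a12 && c22) (+) (a13 && c32)) ((a10 && c03) (+) (a11 && c13) (+) (a12 && c23) (+) (a13 && c33)) ((a20 && c00) (+) (a21 && c10) (+) (a22 && c20) (+) (a23 && c30)) ((a20 && c01) (+) (a21 && c11) (+) (a22 && c21) (+) (a23 && c31)) ((a20 && c02) (+) (a21 && c12) (+) (a22 && c22) (+) (a23 && c32)) ((a20 && c03) (+) (a21 && c13) (+) (a22 && c23) (+) (a23 && c33)) ((a30 && c00) (+) (a31 && c10) (+) (a32 && c20) (+) (a33 && c30)) ((a30 && c01) (+) (a31 && c11) (+) (a32 && c21) (+) (a33 && c31)) ((a30 && c02) (+) (a31 && c12) (+) (a32 && c22) (+) (a33 && c32)) ((a30 && c03) (+) (a31 && c13) (+) (a32 && c23) (+) (a33 && c33)).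
Definition madd (A C : M) := let: mk a00 a01 a02 a03 a10 a11 a12 a13 a20 a21 a22 a23 a30 a31 a32 a33 := A in let: mk c00 c01 c02 c03 c10 c11 c12 c13 c20 c21 c22 c23 c30 c31 c32 c33 := C in
  mk (a00 (+) c00) (a01 (+) c01) (a02 (+) c02) (a03 (+) c03) (a10 (+) c10) (a11 (+) c11) (a12 (+) c12) (a13 (+) c13) (a20 (+) c20) (a21 (+) c21) (a22 (+) c22) (a23 (+) c23) (a30 (+) c30) (a31 (+) c31) (a32 (+) c32) (a33 (+) c33).
Definition msc (x : bool) (A : M) := let: mk a00 a01 a02 a03 a10 a11 a12 a13 a20 a21 a22 a23 a30 a31 a32 a33 := A in
  mk (x && a00) (x && a01) (x && a02) (x && a03) (x && a10) (x && a11) (x && a12) (x && a13) (x && a20) (x && a21) (x && a22) (x && a23) (x && a30) (x && a31) (x && a32) (x && a33).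
Definition meq (A C : M) := let: mk a00 a01 a02 a03 a10 a11 a12 a13 a20 a21 a22 a23 a30 a31 a32 a33 := A in let: mk c00 c01 c02 c03 c10 c11 c12 c13 c20 c21 c22 c23 c30 c31 c32 c33 := C in
  (a00 == c00) && (a01 == c01) && (a02 == c02) && (a03 == c03) && (a10 == c10) && (a11 == c11) && (a12 == c12) && (a13 == c13) && (a20 == c20) && (a21 == c21) && (a22 == c22) && (a23 == c23) && (a30 == c30) && (a31 == c31) && (a32 == c32) && (a33 == c33).
Definition mI := mk true false false false false true false false false false true false false false false true.
Definition mZ := mk false false false false false false false false false false false false false false false false.
Definition vmul (v : V) (A : M) := let: mv x0 x1 x2 x3 := v in let: mk a00 a01 a02 a03 a10 a11 a12 a13 a20 a21 a22 a23 a30 a31 a32 a33 := A in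
  mv ((x0 && a00) (+) (x1 && a10) (+) (x2 && a20) (+) (x3 && a30)) ((x0 && a01) (+) (x1 && a11) (+) (x2 && a21) (+) (x3 && a31)) ((x0 && a02) (+) (x1 && a12) (+) (x2 && a22) (+) (x3 && a32)) ((x0 && a03) (+) (x1 && a13) (+) (x2 && a23) (+) (x3 && a33)).
Definition vnz (v : V) := let: mv x0 x1 x2 x3 := v in [|| x0, x1, x2 | x3].
Definition rows (v0 v1 v2 v3 : V) := let: mv a00 a01 a02 a03 := v0 in let: mv a10 a11 a12 a13 := v1 in let: mv a20 a21 a22 a23 := v2 in let: mv a30 a31 a32 a33 := v3 in mk a00 a01 a02 a03 a10 a11 a12 a13 a20 a21 a22 a23 a30 a31 a32 a33.
Definition row3 (A : M) := let: mk a00 a01 a02 a03 a10 a11 a12 a13 a20 a21 a22 a23 a30 a31 a32 a33 := A in mv a30 a31 a32 a33.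
Definition tbl (v : V) : M := match v with
  | mv false false false false => (mk false false false false false false false false true false false false false false false false)
  | mv false false false true => (mk false false false false false false false true true false false false false false false false)
  | mv false false true false => (mk false false false false true false false true true false false false false false false false)
  | mv false false true true => (mk false true false false false false false false false false false false false false false false)
  | mv false true false false => (mk false false false false false false false false false false false false false false false false)
  | mv false true false true => (mk false false false false false false true true false false false false false false false false)
  | mv false true true false => (mk true true false false true true false false false false false false false false false false)
  | mv false true true true => (mk false false true false false false true false false false false false false false false false)
  | mv true false false false => (mk false true true false false false false false false false false false false false false false)
  | mv true false false true => (mk false false false true false true true false false true true false false false false false)
  | mv true false true false => (mk false true true true false false false false false false false false false false false false)
  | mv true false true true => (mk true true false false true true false false false false false false false false false false)
  | mv true true false false => (mk false true false false false false false false false false false false false false false false)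
  | mv true true false true => (mk false false false false true false false true false false false false false false false false)
  | mv true true true false => (mk false true false true false false false false false false false false false false false false)
  | mv true true true true => (mk true true false true true true false true false false false true false false false false) end.
Definition bl := [:: false; true].
Definition allV := flatten [seq flatten [seq flatten [seq [seq mv a b c d | d <- bl] | c <- bl] | b <- bl] | a <- bl].
Definition nzV := behead allV.
Definition vc (c : V) (A0 A1 A2 A3 : M) := let: mv c0 c1 c2 c3 := c in
  madd (madd (msc c0 A0) (msc c1 A1)) (madd (msc c2 A2) (msc c3 A3)).
Definition derogb B := let B2 := mmul B B in let B3 := mmul B2 B in
  has (fun c => meq (vc c mI B B2 B3) mZ) nzV.
Definition Kof B v := let v1 := vmul v B in let v2 := vmul v1 B in rows v v1 v2 (vmul v2 B).
Definition indep K := all (fun c => vnz (vmul c K)) nzV.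
Definition sq A := mmul A A.
Definition minv K :=
  let K2 := sq K in let K4 := sq K2 in let K8 := sq K4 in let K16 := sq K8 in
  let K32 := sq K16 in let K64 := sq K32 in let K128 := sq K64 in let K256 := sq K128 in
  mmul (mmul (mmul (mmul K256 K128) K32) K2) K.
Definition certND B : option (M * M) :=
  match [seq v <- nzV | indep (Kof B v)] with
  | v :: _ => let K := Kof B v in let Ki := minv K in
     let C := mmul (mmul K B) Ki in
     let N := mmul (mmul Ki (tbl (row3 C))) K in
     Some (N, madd B N)
  | [::] => None end.
Definition certb B := if certND B is Some (N, D) then
   [&& meq B (madd N D), meq (mmul N N) mZ & meq (sq (sq D)) D] else false.
Definition check B := derogb B || certb B.
Definition part r0 := all (fun r1 => all (fun r2 => all (fun r3 => check (rows r0 r1 r2 r3)) allV) allV) allV.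
Definition toM (B : 'M['F_2]_4) : M := mk (B (inord 0) (inord 0) != 0%R) (B (inord 0) (inord 1) != 0%R) (B (inord 0) (inord 2) != 0%R) (B (inord 0) (inord 3) != 0%R) (B (inord 1) (inord 0) != 0%R) (B (inord 1) (inord 1) != 0%R) (B (inord 1) (inord 2) != 0%R) (B (inord 1) (inord 3) != 0%R) (B (inord 2) (inord 0) != 0%R) (B (inord 2) (inord 1) != 0%R) (B (inord 2) (inord 2) != 0%R) (B (inord 2) (inord 3) != 0%R) (B (inord 3) (inord 0) != 0%R) (B (inord 3) (inord 1) != 0%R) (B (inord 3) (inord 2) != 0%R) (B (inord 3) (inord 3) != 0%R).
Definition toR (B : 'M['F_2]_4) i := mv (B (inord i) (inord 0) != 0%R) (B (inord i) (inord 1) != 0%R) (B (inord i) (inord 2) != 0%R) (B (inord i) (inord 3) != 0%R).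
Local Open Scope ring_scope.
Lemma F2_11 : (1 + 1 : 'F_2) = 0. Proof. by apply/val_inj. Qed.
Lemma natr_xor (a b : bool) : ((a (+) b)%:R : 'F_2) = a%:R + b%:R.
Proof. by case: a; case: b; rewrite /= ?add0r ?addr0 ?F2_11. Qed.
Lemma natr_and (a b : bool) : ((a && b)%:R : 'F_2) = a%:R * b%:R.
Proof. by case: a; case: b; rewrite /= ?mul0r ?mulr0 ?mulr1. Qed.
Definition phi (A : M) : 'M['F_2]_4 := \matrix_(i, j) (ent A i j)%:R.
Lemma phi_mul A C : phi (mmul A C) = phi A *m phi C.
Proof.
case: A => a00 a01 a02 a03 a10 a11 a12 a13 a20 a21 a22 a23 a30 a31 a32 a33.
case: C => c00 c01 c02 c03 c10 c11 c12 c13 c20 c21 c22 c23 c30 c31 c32 c33.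
apply/matrixP => i j; rewrite !mxE !big_ord_recl big_ord0 addr0 !mxE.
by case: i => [[|[|[|[|i]]]] Hi] //; case: j => [[|[|[|[|j]]]] Hj] //=;
  rewrite !natr_xor !natr_and !addrA.
Qed.
Lemma phi_add A C : phi (madd A C) = phi A + phi C.
Proof.
case: A => a00 a01 a02 a03 a10 a11 a12 a13 a20 a21 a22 a23 a30 a31 a32 a33.
case: C => c00 c01 c02 c03 c10 c11 c12 c13 c20 c21 c22 c23 c30 c31 c32 c33.
apply/matrixP => i j; rewrite !mxE.
by case: i => [[|[|[|[|i]]]] Hi] //; case: j => [[|[|[|[|j]]]] Hj] //=;
  rewrite !natr_xor.
Qed.
Lemma phi_sc x A : phi (msc x A) = x%:R *: phi A.
Proof.
case: A => a00 a01 a02 a03 a10 a11 a12 a13 a20 a21 a22 a23 a30 a31 a32 a33.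
apply/matrixP => i j; rewrite !mxE.
by case: i => [[|[|[|[|i]]]] Hi] //; case: j => [[|[|[|[|j]]]] Hj] //=;
  rewrite !natr_and.
Qed.
Lemma phi_I : phi mI = 1%:M.
Proof.
apply/matrixP => i j; rewrite !mxE.
by case: i => [[|[|[|[|i]]]] Hi] //; case: j => [[|[|[|[|j]]]] Hj].
Qed.
Lemma phi_Z : phi mZ = 0.
Proof.
apply/matrixP => i j; rewrite !mxE.
by case: i => [[|[|[|[|i]]]] Hi] //; case: j => [[|[|[|[|j]]]] Hj].
Qed.
Lemma meqP A C : meq A C -> A = C.
Proof.
case: A => a00 a01 a02 a03 a10 a11 a12 a13 a20 a21 a22 a23 a30 a31 a32 a33.
case: C => c00 c01 c02 c03 c10 c11 c12 c13 c20 c21 c22 c23 c30 c31 c32 c33.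
rewrite /meq => H; repeat (case/andP: H => H /eqP ->); by move/eqP: H ->.
Qed.
Lemma F2_01 (x : 'F_2) : x = 0 \/ x = 1.
Proof. case: x => [[|[|m]] Hm]; [left|right|]; try by apply/val_inj. by []. Qed.
Lemma natr_nz (x : 'F_2) : (x != 0)%:R = x.
Proof. by case: (F2_01 x) => ->; rewrite ?eqxx // oner_eq0. Qed.
Lemma phi_toM B : phi (toM B) = B.
Proof.
apply/matrixP => i j; rewrite !mxE.
case: i => [[|[|[|[|i]]]] Hi] //; case: j => [[|[|[|[|j]]]] Hj] //=;
  by rewrite natr_nz; congr (B _ _); apply/val_inj; rewrite /= inordK.
Qed.
Lemma toM_rows B : toM B = rows (toR B 0) (toR B 1) (toR B 2) (toR B 3).
Proof. by []. Qed.
Fixpoint InL T (x : T) (s : seq T) : Prop := if s is a :: s' then a = x \/ InL x s' else False.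
Lemma In_allV v : InL v allV.
Proof. by case: v => [] [] [] [] []; rewrite /allV /=; tauto. Qed.
Lemma allIn T (P : pred T) s : all P s -> forall x, InL x s -> P x.
Proof. elim: s => //= a s IH /andP[Pa Ps] x [<-//|]; exact: IH. Qed.
Lemma hasIn T (P : pred T) s : has P s -> exists x, InL x s /\ P x.
Proof. elim: s => //= a s IH /orP[Pa|/IH[x [? ?]]]; [exists a|exists x]; tauto. Qed.
Lemma allparts : all part allV. Proof. vm_compute. reflexivity. Qed.
Lemma check_all B : check (toM B).
Proof.
rewrite toM_rows.
have := allIn allparts (In_allV (toR B 0)); rewrite /part.
move=> /allIn /(_ _ (In_allV (toR B 1))) /allIn /(_ _ (In_allV (toR B 2))) /allIn.
by apply; apply: In_allV.
Qed.
Lemma nd_indep (B : 'M['F_2]_4) c0 c1 c2 c3 : mxminpoly B = char_poly B ->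
  c0%:M + c1 *: B + c2 *: (B *m B) + c3 *: (B *m B *m B) = 0 ->
  [&& c0 == 0, c1 == 0, c2 == 0 & c3 == 0].
Proof.
move=> ND H.
pose E i := [:: c0; c1; c2; c3]`_i.
pose p := \poly_(i < 4) E i.
have hp: horner_mx B p = 0.
  rewrite /p poly_def rmorph_sum !big_ord_recl big_ord0 /=.
  have hX k : horner_mx B 'X^k = B ^+ k by rewrite -[in RHS](horner_mx_X B) rmorphXn.
  rewrite !(horner_mxZ B) !hX /bump /= expr0 expr1 addr0 -H /E /= scalemx1.
  by rewrite !mulmxE -expr2 -exprSr !addrA.
have /eqP p0 : p == 0.
  apply: contraLR isT => pn0.
  have := dvdp_leq pn0 (mxminpoly_min hp).
  by rewrite ND size_char_poly => /leq_trans/(_ (size_poly 4 E)).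
have c i : E i = 0.
  case: (ltnP i 4) => hi; last by rewrite /E nth_default.
  by have := coef_poly 4 E i; rewrite -/p p0 coef0 hi => <-.
by rewrite -[c0]/(E 0) -[c1]/(E 1) -[c2]/(E 2) -[c3]/(E 3) !c eqxx.
Qed.
Lemma nzV_nz v : InL v nzV -> vnz v.
Proof. by case: v => [] [] [] [] [] //=; intuition discriminate. Qed.

Theorem corollary2p6 (B : 'M['F_2]_4) :
  non_derogative B ->
  exists N D : 'M['F_2]_4, [/\ B = N + D, N ^+ 2 = 0 & D ^+ 4 = D].
Proof.
move=> ND.
have := check_all B; rewrite /check => /orP[Hd|].
  exfalso; move: Hd; rewrite /derogb => /hasIn [[c0 c1 c2 c3] [/nzV_nz Hnz /meqP He]].
  have := congr1 phi He; rewrite /vc !phi_add !phi_sc !phi_mul phi_I phi_Z phi_toM.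
  rewrite scalemx1 !addrA => /(nd_indep ND); clear He.
  by move: Hnz; case: c0; case: c1; case: c2; case: c3; rewrite //= oner_eq0 ?andbF.
rewrite /certb; case: (certND (toM B)) => [[N D]|] // /and3P[/meqP e1 /meqP e2 /meqP e3].
exists (phi N), (phi D); split.
- by rewrite -{1}(phi_toM B) e1 phi_add.
- by rewrite expr2 -mulmxE -phi_mul e2 phi_Z.
- have := congr1 phi e3; rewrite /sq !phi_mul !mulmxE => h.
  by rewrite -{2}h !exprS expr0 mulr1 !mulrA.
Qed.
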